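(* Let $(M_0,d,\Gamma)$ be a cone-like space and let $\{x_n\}$ be a Cauchy sequence in $(M_0,d)$ which does not converge in $M_0$. Then there exist $x\in M_0$ and a sequence $\{f_n\}$ of elements of $\Gamma$ with $\lim_{n\to\infty}\rho(f_n)=0$ such that the Cauchy sequences $\{x_n\}$ and $\{f_n(x)\}$ are equivalent.
   Context: A cone-like space is a locally compact metric space $(M_0,d)$ together with a finitely generated, non-trivial group $\Gamma$ acting freely and properly discontinuously on $M_0$ by homotheties (i.e. for each $f\in\Gamma$ there is $\rho(f)>0$ with $d(f(x),f(y))=\rho(f)d(x,y)$ for all $x,y$), such that the identity is the only element of $\Gamma$ acting as an isometry, and such that the quotient $M_0/\Gamma$ is compact. Two Cauchy sequences $\{a_n\},\{b_n\}$ are equivalent if $d(a_n,b_n)\to0$. *)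

(* Defs.v *)
From Stdlib Require Import Reals List.
Open Scope R_scope.

Section Defs.
Variable M : Type.
Variable d : M -> M -> R.

Definition is_metric : Prop :=
  (forall x y, 0 <= d x y) /\
  (forall x y, d x y = 0 <-> x = y) /\
  (forall x y, d x y = d y x) /\
  (forall x y z, d x z <= d x y + d y z).

Definition ball (x : M) (r : R) : M -> Prop := fun y => d x y < r.

Definition is_open (U : M -> Prop) : Prop :=
  forall x, U x -> exists r, 0 < r /\ forall y, ball x r y -> U y.

Definition is_compact (K : M -> Prop) : Prop :=
  forall (I : Type) (U : I -> M -> Prop),
    (forall i, is_open (U i)) ->
    (forall x, K x -> exists i, U i x) ->
    exists l : list I, forall x, K x -> exists i, In i l /\ U i x.

Definition locally_compact : Prop :=
  forall x, exists K, is_compact K /\ exists r, 0 < r /\ forall y, ball x r y -> K y.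

Definition cauchy_seq (u : nat -> M) : Prop :=
  forall eps, 0 < eps -> exists N, forall n m, (n >= N)%nat -> (m >= N)%nat -> d (u n) (u m) < eps.

Definition seq_converges (u : nat -> M) : Prop :=
  exists x, Un_cv (fun n => d (u n) x) 0.

Definition equiv_seq (u v : nat -> M) : Prop := Un_cv (fun n => d (u n) (v n)) 0.

Variable G : Type.
Variable mul : G -> G -> G.
Variable e : G.
Variable inv : G -> G.
Variable act : G -> M -> M.
Variable rho : G -> R.

Definition is_group : Prop :=
  (forall a b c, mul (mul a b) c = mul a (mul b c)) /\
  (forall a, mul e a = a) /\ (forall a, mul a e = a) /\
  (forall a, mul (inv a) a = e) /\ (forall a, mul a (inv a) = e).

Inductive generated (S : list G) : G -> Prop :=
  | gen_e : generated S e
  | gen_mul : forall s g, In s S -> generated S g -> generated S (mul s g)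
  | gen_mulinv : forall s g, In s S -> generated S g -> generated S (mul (inv s) g).

Definition finitely_generated : Prop := exists S : list G, forall g, generated S g.

Definition is_action : Prop :=
  (forall x, act e x = x) /\ (forall g h x, act (mul g h) x = act g (act h x)).

Definition acts_freely : Prop := forall g x, act g x = x -> g = e.

Definition properly_discontinuous : Prop :=
  forall K, is_compact K ->
    exists l : list G, forall g, (exists x, K x /\ K (act g x)) -> In g l.

Definition acts_by_homotheties : Prop :=
  forall f, 0 < rho f /\ forall x y, d (act f x) (act f y) = rho f * d x y.

Definition only_identity_isometry : Prop :=
  forall f, (forall x y, d (act f x) (act f y) = d x y) -> f = e.

(* Compactness of M/Γ with the quotient topology: open sets of M/Γ
   correspond to Γ-invariant open sets of M. *)
Definition quotient_compact : Prop :=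
  forall (I : Type) (U : I -> M -> Prop),
    (forall i, is_open (U i)) ->
    (forall i g x, U i x -> U i (act g x)) ->
    (forall x, exists i, U i x) ->
    exists l : list I, forall x, exists i, In i l /\ U i x.

Definition cone_like : Prop :=
  is_metric /\ locally_compact /\ is_group /\ finitely_generated /\
  (exists g, g <> e) /\ is_action /\ acts_freely /\ properly_discontinuous /\
  acts_by_homotheties /\ only_identity_isometry /\ quotient_compact.

End Defs.

(* Main.v *)
Require Import Defs.
From Stdlib Require Import Reals List Lra Classical ClassicalEpsilon.
Open Scope R_scope.

Lemma list_ub {A} (l : list A) (f : A -> R) : exists C, forall a, In a l -> f a <= C.
Proof.
  induction l as [|a l [C HC]].
  - exists 0. intros a [].
  - exists (Rmax (f a) C). intros b [<-|Hb]. apply Rmax_l.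
    eapply Rle_trans. apply HC; auto. apply Rmax_r.
Qed.

Lemma list_lb_pos {A} (l : list A) (f : A -> R) :
  (forall a, 0 < f a) -> exists c, 0 < c /\ forall a, In a l -> c <= f a.
Proof.
  intros Hf. induction l as [|a l [c [Hc HC]]].
  - exists 1. split. lra. intros a [].
  - exists (Rmin (f a) c). split. apply Rmin_pos; auto.
    intros b [<-|Hb]. apply Rmin_l. eapply Rle_trans. apply Rmin_r. apply HC; auto.
Qed.

Lemma list_ub_nat {A} (l : list A) (f : A -> nat) : exists N, forall a, In a l -> (f a <= N)%nat.
Proof.
  induction l as [|a l [N HN]].
  - exists O. intros a [].
  - exists (Nat.max (f a) N). intros b [<-|Hb]. apply Nat.le_max_l.
    eapply Nat.le_trans. apply HN; auto. apply Nat.le_max_r.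
Qed.

Lemma choice_fun {A B} (P : A -> B -> Prop) : (forall a, exists b, P a b) -> exists f, forall a, P a (f a).
Proof.
  intros H. exists (fun a => proj1_sig (constructive_indefinite_description _ (H a))).
  intros a. exact (proj2_sig (constructive_indefinite_description _ (H a))).
Qed.

Section S.
Variables (M : Type) (d : M -> M -> R).
Hypothesis Hmet : is_metric M d.

Lemma d_nonneg x y : 0 <= d x y. Proof. apply Hmet. Qed.
Lemma d_refl x : d x x = 0. Proof. apply (proj1 (proj2 Hmet)). reflexivity. Qed.
Lemma d_sym x y : d x y = d y x. Proof. apply Hmet. Qed.
Lemma d_tri x y z : d x z <= d x y + d y z. Proof. apply Hmet. Qed.

Lemma ball_open y r : is_open M d (ball M d y r).
Proof.
  intros z Hz. unfold ball in *. exists (r - d y z). split. lra.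
  intros w Hw. pose proof (d_tri y z w). lra.
Qed.

Lemma cauchy_compact_conv (u : nat -> M) (K : M -> Prop) N :
  cauchy_seq M d u -> is_compact M d K -> (forall m, (m >= N)%nat -> K (u m)) -> seq_converges M d u.
Proof.
  intros Hu HK HKu. apply NNPP. intros Hnc.
  assert (Hr : forall z, exists p : R * nat, 0 < fst p /\ forall n, (n >= snd p)%nat -> fst p <= d (u n) z).
  { intros z.
    assert (Hz : ~ Un_cv (fun n => d (u n) z) 0) by (intro H; apply Hnc; exists z; exact H).
    unfold Un_cv in Hz. apply not_all_ex_not in Hz. destruct Hz as [eps Hz].
    apply imply_to_and in Hz. destruct Hz as [Heps Hz].
    destruct (Hu (eps/2)) as [N1 HN1]. lra.
    assert (Hex : exists n, (n >= N1)%nat /\ eps <= d (u n) z).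
    { apply NNPP. intros Hne. apply Hz. exists N1. intros n Hn. unfold R_dist.
      rewrite Rminus_0_r, Rabs_right by (apply Rle_ge, d_nonneg).
      apply Rnot_le_lt. intros Hle. apply Hne. exists n. split; auto. }
    destruct Hex as [n1 [Hn1 Hd]].
    exists (eps/2, N1). simpl. split. lra. intros n Hn.
    pose proof (HN1 n1 n Hn1 Hn). pose proof (d_tri (u n1) (u n) z). lra. }
  apply choice_fun in Hr. destruct Hr as [rf Hrf].
  destruct (HK M (fun z => ball M d z (fst (rf z)))) as [l Hl].
  - intros z. apply ball_open.
  - intros z _. exists z. unfold ball. rewrite d_refl. apply Hrf.
  - destruct (list_ub_nat l (fun z => snd (rf z))) as [N2 HN2].
    destruct (Hl (u (Nat.max N N2))) as [z [Hzl Hz]].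
    { apply HKu. unfold ge. apply Nat.le_max_l. }
    unfold ball in Hz. rewrite d_sym in Hz.
    assert (Hle : fst (rf z) <= d (u (Nat.max N N2)) z).
    { apply Hrf. unfold ge. eapply Nat.le_trans. apply (HN2 z); auto. apply Nat.le_max_r. }
    lra.
Qed.
End S.

Theorem lemma2p3 (M : Type) (d : M -> M -> R) (G : Type)
  (mul : G -> G -> G) (e : G) (inv : G -> G) (act : G -> M -> M) (rho : G -> R)
  (Hcone : cone_like M d G mul e inv act rho)
  (x : nat -> M) (Hx : cauchy_seq M d x) (Hnc : ~ seq_converges M d x) :
  exists (p : M) (f : nat -> G),
    Un_cv (fun n => rho (f n)) 0 /\
    equiv_seq M d x (fun n => act (f n) p).
Proof.
  destruct Hcone as [Hmet [Hlc [Hgrp [Hfg [Hnt [Hact [Hfree [Hpd [Hhom [Hiso Hqc]]]]]]]]]].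
  destruct Hact as [Hae Ham].
  destruct Hgrp as [_ [_ [_ [Hinvl Hinvr]]]].
  assert (Hrho : forall g, 0 < rho g) by (intro g; apply Hhom).
  assert (Hh : forall g a b, d (act g a) (act g b) = rho g * d a b) by (intro g; apply Hhom).
  assert (Hil : forall g w, act (inv g) (act g w) = w).
  { intros. rewrite <- Ham, Hinvl. apply Hae. }
  assert (Hir : forall g w, act g (act (inv g) w) = w).
  { intros. rewrite <- Ham, Hinvr. apply Hae. }
  assert (Hhi : forall g a b, d (act (inv g) a) (act (inv g) b) = d a b / rho g).
  { intros. assert (E := Hh g (act (inv g) a) (act (inv g) b)). rewrite !Hir in E.
    rewrite E. field. apply Rgt_not_eq, Hrho. }
  assert (Hr : forall y, exists r, 0 < r /\ exists K, is_compact M d K /\ forall z, ball M d y r z -> K z).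
  { intros y. destruct (Hlc y) as [K [HK [r [Hr HKr]]]]. exists r. split; auto. exists K. auto. }
  apply choice_fun in Hr. destruct Hr as [rf Hrf].
  destruct (Hqc M (fun y z => exists g w, d y w < rf y / 2 /\ z = act g w)) as [L HL].
  - intros y z [g [w [Hw ->]]].
    exists (rho g * (rf y / 2 - d y w)). split.
    { apply Rmult_lt_0_compat; [apply Hrho | lra]. }
    intros z' Hz'. unfold ball in Hz'. exists g, (act (inv g) z'). split; [|symmetry; apply Hir].
    assert (Hd : d w (act (inv g) z') < rf y / 2 - d y w).
    { rewrite <- (Hil g w) at 1. rewrite Hhi.
      apply (Rmult_lt_reg_l (rho g)); [apply Hrho|]. unfold Rdiv.
      replace (rho g * (d (act g w) z' * / rho g)) with (d (act g w) z')
        by (field; apply Rgt_not_eq, Hrho).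
      exact Hz'. }
    pose proof (d_tri M d Hmet y w (act (inv g) z')). lra.
  - intros y h z [g [w [Hw ->]]]. exists (mul h g), w. split; [exact Hw | rewrite Ham; reflexivity].
  - intros z. exists z, e, z. rewrite (d_refl M d Hmet), Hae. split; [specialize (Hrf z); lra | reflexivity].
  - assert (Hdec : forall n, exists t : M * (G * M), In (fst t) L /\ d (fst t) (snd (snd t)) < rf (fst t) / 2
                  /\ x n = act (fst (snd t)) (snd (snd t))).
    { intros n. destruct (HL (x n)) as [y [Hy [g [w [Hw Hx']]]]]. exists (y, (g, w)). simpl. auto. }
    apply choice_fun in Hdec. destruct Hdec as [T HT].
    pose (yn := fun n => fst (T n)). pose (gn := fun n => fst (snd (T n))). pose (wn := fun n => snd (snd (T n))).
    assert (HT' : forall n, In (yn n) L /\ d (yn n) (wn n) < rf (yn n) / 2 /\ x n = act (gn n) (wn n)) by exact HT.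
    clearbody yn gn wn. clear HT.
    destruct (list_lb_pos L (fun y => rf y / 2)) as [dl [Hdl HLd]].
    { intros a. specialize (Hrf a). lra. }
    destruct (list_ub L (fun y => rf y / 2 + d y (x 0%nat))) as [C HC].
    assert (Hkey : forall eps, 0 < eps -> exists N, forall n, (n >= N)%nat -> rho (gn n) < eps).
    { intros eps Heps. apply NNPP. intros Hne.
      assert (Hfr : forall N, exists n, (n >= N)%nat /\ eps <= rho (gn n)).
      { intros N. apply NNPP. intros H. apply Hne. exists N. intros n Hn.
        apply Rnot_le_lt. intros Hle. apply H. exists n. auto. }
      destruct (Hx (eps * dl)) as [N0 HN0]. { apply Rmult_lt_0_compat; auto. }
      destruct (Hfr N0) as [n0 [Hn0 Hge]].
      destruct (HT' n0) as [Hy [Hw Hxn0]].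
      destruct (Hrf (yn n0)) as [Hry [K [HK HKb]]].
      apply Hnc.
      assert (Hv : seq_converges M d (fun m => act (inv (gn n0)) (x m))).
      { refine (cauchy_compact_conv M d Hmet _ K N0 _ HK _).
        - intros eps' Heps'. destruct (Hx (eps' * rho (gn n0))) as [N1 HN1].
          { apply Rmult_lt_0_compat; auto. }
          exists N1. intros a b Ha Hb. rewrite Hhi. specialize (HN1 a b Ha Hb).
          apply (Rmult_lt_reg_l (rho (gn n0))); auto. unfold Rdiv.
          replace (rho (gn n0) * (d (x a) (x b) * / rho (gn n0))) with (d (x a) (x b))
            by (field; apply Rgt_not_eq, Hrho).
          rewrite Rmult_comm. exact HN1.
        - intros m Hm. apply HKb. unfold ball.
          assert (Hwm : d (wn n0) (act (inv (gn n0)) (x m)) < dl).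
          { rewrite <- (Hil (gn n0) (wn n0)) at 1. rewrite <- Hxn0, Hhi.
            apply (Rmult_lt_reg_l (rho (gn n0))); auto. unfold Rdiv.
            replace (rho (gn n0) * (d (x n0) (x m) * / rho (gn n0))) with (d (x n0) (x m))
              by (field; apply Rgt_not_eq, Hrho).
            specialize (HN0 n0 m Hn0 Hm). nra. }
          pose proof (d_tri M d Hmet (yn n0) (wn n0) (act (inv (gn n0)) (x m))).
          pose proof (HLd _ Hy). simpl in *. lra. }
      destruct Hv as [z Hz]. exists (act (gn n0) z). intros eps' He.
      destruct (Hz (eps' / rho (gn n0))) as [N1 HN1]. { apply Rdiv_lt_0_compat; auto. }
      exists N1. intros n Hn. specialize (HN1 n Hn). unfold R_dist in *.
      rewrite Rminus_0_r in *. rewrite Rabs_right in HN1 by (apply Rle_ge, (d_nonneg M d Hmet)).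
      rewrite Rabs_right by (apply Rle_ge, (d_nonneg M d Hmet)).
      rewrite <- (Hir (gn n0) (x n)). rewrite Hh.
      apply Rmult_lt_compat_l with (r := rho (gn n0)) in HN1; auto.
      replace (rho (gn n0) * (eps' / rho (gn n0))) with eps' in HN1 by (field; apply Rgt_not_eq, Hrho).
      exact HN1. }
    exists (x 0%nat), gn. split.
    + intros eps He. destruct (Hkey eps He) as [N HN]. exists N. intros n Hn. unfold R_dist.
      rewrite Rminus_0_r, Rabs_right. apply HN; auto. apply Rle_ge, Rlt_le, Hrho.
    + intros eps He. set (C' := Rmax C 1).
      assert (HC' : 0 < C') by (unfold C'; pose proof (Rmax_r C 1); lra).
      destruct (Hkey (eps / C')) as [N HN]. { apply Rdiv_lt_0_compat; auto. }
      exists N. intros n Hn. specialize (HN n Hn). unfold R_dist.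
      rewrite Rminus_0_r, Rabs_right by (apply Rle_ge, (d_nonneg M d Hmet)).
      destruct (HT' n) as [Hy [Hw Hxn]]. rewrite Hxn.
      pose proof (d_tri M d Hmet (act (gn n) (wn n)) (act (gn n) (yn n)) (act (gn n) (x 0%nat))).
      rewrite !Hh in H.
      pose proof (HC _ Hy) as HCy. simpl in HCy.
      assert (HCC : C <= C') by apply Rmax_l.
      rewrite (d_sym M d Hmet (wn n) (yn n)) in H.
      assert (Hr1 : rho (gn n) * C' < eps).
      { apply Rmult_lt_compat_r with (r := C') in HN; auto.
        replace (eps / C' * C') with eps in HN by (field; apply Rgt_not_eq, HC'). exact HN. }
      pose proof (Hrho (gn n)).
      assert (rho (gn n) * (d (yn n) (wn n) + d (yn n) (x 0%nat)) <= rho (gn n) * C').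
      { apply Rmult_le_compat_l; lra. }
      rewrite Hh. lra.
Qed.
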